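(* Let $\Bbbk$ be a field, $R=\Bbbk[x,y,z]$, $d'\ge2$ an integer and $I=(x^{2d'},y^{2d'},z^{2d'},x^{d'}y^{d'},xz^{2d'-1})$. Then: (a) the minimal graded free resolution of $R/I$ has the form $$0\to R(-(4d'+1))\oplus R(-(5d'-1))^2\to R(-(2d'+1))\oplus R(-3d')^2\oplus R(-(4d'-1))^2\oplus R(-4d')^2\to R(-2d')^5\to R\to R/I\to0;$$ (b) $\mathrm{Soc}(R/I)\cong\Bbbk(-(4d'-2))\oplus\Bbbk(-(5d'-4))^2$; (c) $V(I_D(M_{2d',5,3d'-3}))$ is a proper subset of $(\mathbb P^N)^5$, where (with $n=3$) $N=\binom{2d'+2}{2}-1$ and $D=\dim_\Bbbk R_{5d'-3}$.
   Context: $\mathrm{Soc}(R/I)=(I:\mathfrak m)/I$ with $\mathfrak m=(x,y,z)$; $\Bbbk(-j)$ is $\Bbbk$ in degree $j$. Parameter setup (with $n=3$): for nonzero forms $f_t=\sum_{|\alpha|=\delta}\lambda^{(t)}_\alpha\mathbf x^\alpha$ ($1\le t\le r$) of degree $\delta$ in $R=\Bbbk[x_1,\dots,x_n]$, set $N=\binom{\delta+n-1}{\delta}-1$ and let $P_{\mathbf f}\in(\mathbb P^N)^r$ be the point with $t$-th component $(\lambda^{(t)}_\alpha)_\alpha$. For $e\ge0$ put $D=\dim_\Bbbk R_{\delta+e}$. Let $S=\Bbbk[Y^{(t)}_\alpha:1\le t\le r,|\alpha|=\delta]$. $M_{\delta,r,e}$ is the $D\times r\binom{e+n-1}{n-1}$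 matrix over $S$ with rows indexed by monomials $\mathbf x^\gamma$, $|\gamma|=\delta+e$, columns indexed by $(t,\beta)$, $|\beta|=e$, and $(\gamma,(t,\beta))$ entry $Y^{(t)}_{\gamma-\beta}$ if $\gamma-\beta\in\mathbb N^n$, $0$ otherwise (the generic coefficient matrix of $\{\mathbf x^\beta f_t\}$ in the monomial basis of $R_{\delta+e}$). $I_D(M_{\delta,r,e})$ is its ideal of $D\times D$ minors and $V(\cdot)$ its zero set in $(\mathbb P^N)^r$. *)

(* Defs.v *)
From HB Require Import structures.
From mathcomp Require Import all_boot all_order all_algebra.
From mathcomp Require Import mpoly.
Set Implicit Arguments. Unset Strict Implicit. Unset Printing Implicit Defensive.
Import GRing.Theory.
Local Open Scope ring_scope.

Section Defs.
Variable K : fieldType.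
Variable n : nat.
Local Notation P := {mpoly K[n]}.

Definition in_ideal (k : nat) (g : 'I_k -> P) (p : P) : Prop :=
  exists c : 'I_k -> P, p = \sum_(i < k) c i * g i.

(** The matrix [A] (acting on column vectors) represents a degree-0 graded
    map  (+)_j R(-b j) --> (+)_i R(-a i) : entry (i,j) is homogeneous of
    degree b j - a i (and vanishes when that degree would be negative). *)
Definition graded_mx (m p : nat) (a : 'I_m -> nat) (b : 'I_p -> nat)
  (A : 'M[P]_(m, p)) : Prop :=
  forall i j, A i j = 0 \/ ((a i <= b j)%N /\ A i j \is (b j - a i)%N.-homog).

(** Minimality: all entries lie in the irrelevant ideal (no constant term). *)
Definition minimal_mx (m p : nat) (A : 'M[P]_(m, p)) : Prop :=
  forall i j, (A i j)@_0%MM = 0.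

Definition exact_at (m p q : nat) (A : 'M[P]_(m, p)) (B : 'M[P]_(p, q)) : Prop :=
  A *m B = 0 /\ forall v : 'cV[P]_p, A *m v = 0 -> exists w : 'cV[P]_q, v = B *m w.

(** [R/I] (I generated by [g]) has a minimal graded free resolution
      0 -> F3 -> F2 -> F1 -> R -> R/I -> 0,
    with F_i = (+)_j R(-s_i j). *)
Definition min_graded_free_res3 (k : nat) (g : 'I_k -> P)
  (b1 b2 b3 : nat) (s1 : 'I_b1 -> nat) (s2 : 'I_b2 -> nat) (s3 : 'I_b3 -> nat)
  : Prop :=
  exists (d1 : 'M[P]_(1, b1)) (d2 : 'M[P]_(b1, b2)) (d3 : 'M[P]_(b2, b3)),
    graded_mx (fun _ => 0%N) s1 d1 /\ graded_mx s1 s2 d2 /\ graded_mx s2 s3 d3 /\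
    minimal_mx d1 /\ minimal_mx d2 /\ minimal_mx d3 /\
    (* image of F1 -> R is I, so the cokernel is R/I *)
    (forall p, in_ideal g p <-> in_ideal (fun j => d1 ord0 j) p) /\
    exact_at d1 d2 /\ exact_at d2 d3 /\
    (forall v : 'cV[P]_b3, d3 *m v = 0 -> v = 0).

(** Soc(R/I) = (I : m)/I  with  m = (x_0, ..., x_{n-1}). *)
Definition in_colon_max (k : nat) (g : 'I_k -> P) (p : P) : Prop :=
  forall v : 'I_n, in_ideal g ('X_v * p).

(** Soc(R/I) is isomorphic, as a graded module, to (+)_j k(-s_j):
    there are homogeneous elements f_j of degree s_j of (I:m) whose classes
    form a k-basis of (I:m)/I (m acts as zero on Soc(R/I)). *)
Definition socle_iso (k : nat) (g : 'I_k -> P) (s : seq nat) : Prop :=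
  exists f : 'I_(size s) -> P,
    [/\ forall j, f j \is (nth 0%N s j).-homog,
        forall j, in_colon_max g (f j),
        forall q, in_colon_max g q ->
          exists c : 'I_(size s) -> K, in_ideal g (q - \sum_j c j *: f j) &
        forall c : 'I_(size s) -> K,
          in_ideal g (\sum_j c j *: f j) -> forall j, c j = 0].
End Defs.

Definition expo (n d : nat) :=
  {t : n.-tuple 'I_d.+1 | (\sum_(i < n) (val (tnth t i)) == d)%N}.
Definition ex (n d : nat) (a : expo n d) (i : 'I_n) : nat := val (tnth (val a) i).

(** Evaluation at the point lam = (lam^(t)_alpha) of the generic matrix
    M_{delta,r,e}: rows gamma (|gamma| = delta+e), columns (t, beta) (|beta| = e),
    entry lam^(t)_{gamma-beta} if gamma-beta >= 0, else 0. *)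
Definition Meval (K : fieldType) (n delta r e : nat)
  (lam : 'I_r -> expo n delta -> K)
  (gam : expo n (delta + e)) (tb : 'I_r * expo n e) : K :=
  \sum_(al : expo n delta | [forall i, ex gam i == (ex al i + ex tb.2 i)%N])
     lam tb.1 al.

(** D = dim_k R_{delta+e} = number of monomials of degree delta+e. *)
Definition Ddim (n d : nat) : nat := #|{: expo n d}|.

(** Some D x D minor of M_{delta,r,e} is nonzero at lam (the minor uses all
    D rows, in the order of enumeration, and D distinct columns). *)
Definition some_maximal_minor_nonzero (K : fieldType) (n delta r e : nat)
  (lam : 'I_r -> expo n delta -> K) : Prop :=
  exists col : 'I_(Ddim n (delta + e)) -> 'I_r * expo n e,
    injective col /\
    \det (\matrix_(i, j) @Meval K n delta r e lam (enum_val i) (col j)) != 0.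

(** V(I_D(M_{delta,r,e})) is a proper subset of (P^N)^r: some k-point
    (each component a nonzero coefficient vector) lies outside it. *)
Definition V_proper (K : fieldType) (n delta r e : nat) : Prop :=
  exists lam : 'I_r -> expo n delta -> K,
    (forall t, exists al, lam t al != 0) /\ @some_maximal_minor_nonzero K n delta r e lam.

(* Main.v *)
Require Import Defs.
From HB Require Import structures.
From mathcomp Require Import all_boot all_order all_algebra.
From mathcomp Require Import mpoly.
From mathcomp Require Import zify ring.
From Stdlib Require Import FunctionalExtensionality.
Import GRing.Theory.
Local Open Scope ring_scope.

Set Implicit Arguments. Unset Strict Implicit. Unset Printing Implicit Defensive.

Section Core.
Variable K : fieldType.
Variable n : nat.
Local Notation P := {mpoly K[n]}.
Implicit Types (p q r : P) (m g : 'X_{1..n}).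

Lemma coef_sumX (s : seq 'X_{1..n}) (f : 'X_{1..n} -> K) m : uniq s ->
  (\sum_(m' <- s) f m' *: ('X_[m'] : P))@_m = if m \in s then f m else 0.
Proof.
move=> us; rewrite raddf_sum /=.
case: ifP => ms.
  rewrite (bigD1_seq m) //= mcoeffZ mcoeffX eqxx mulr1 big1 ?addr0 //.
  by move=> i /negbTE ne; rewrite mcoeffZ mcoeffX ne mulr0.
rewrite big1_seq // => i /andP [_ iin]; rewrite mcoeffZ mcoeffX.
case: eqP => [e|_]; last by rewrite mulr0.
by rewrite -e iin in ms.
Qed.

Lemma split_supp (Q : pred 'X_{1..n}) p : exists r : P,
  (forall m, r@_m = if Q m then 0 else p@_m) /\
  (forall m, (p - r)@_m = if Q m then p@_m else 0).
Proof.
exists (\sum_(m <- msupp p | ~~ Q m) p@_m *: 'X_[m]).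
have H : forall m, (\sum_(m <- msupp p | ~~ Q m) p@_m *: ('X_[m] : P))@_m
     = if Q m then 0 else p@_m.
  move=> m; rewrite -big_filter coef_sumX ?filter_uniq ?msupp_uniq //.
  rewrite mem_filter; case: (Q m) => //=.
  by case: ifP => // /negbT; rewrite mcoeff_msupp negbK => /eqP.
split=> // m; rewrite mcoeffB H; case: (Q m); rewrite ?subr0 ?subrr //.
Qed.

Lemma coefMX_nle p g m : ~~ (g <= m)%MM -> (p * 'X_[g])@_m = 0.
Proof.
move=> ngm; apply/eqP; rewrite mcoeff_eq0; apply/negP.
rewrite (perm_mem (msuppMX p g)) => /mapP [m' _ e]; move: ngm; rewrite e.
by move/mnm_lepP; apply => i; rewrite mnmDE leq_addr.
Qed.

Lemma coefMX p g m : (p * 'X_[g])@_(g + m) = p@_m.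
Proof. exact: mcoeffMX. Qed.

Section Ideal.
Variable k : nat.
Variable G : 'I_k -> 'X_{1..n}.
Local Notation gX := (fun j => ('X_[G j] : P)).

Lemma in_ideal0 : in_ideal gX 0.
Proof. by exists (fun _ => 0); rewrite big1 // => i _; rewrite mul0r. Qed.

Lemma in_idealD p q : in_ideal gX p -> in_ideal gX q -> in_ideal gX (p + q).
Proof.
move=> [c ->] [c' ->]; exists (fun i => c i + c' i).
by rewrite -big_split; apply: eq_bigr => i _; rewrite mulrDl.
Qed.

Lemma in_idealN p : in_ideal gX p -> in_ideal gX (- p).
Proof.
move=> [c ->]; exists (fun i => - c i).
by rewrite -sumrN; apply: eq_bigr => i _; rewrite mulNr.
Qed.

Lemma in_idealB p q : in_ideal gX p -> in_ideal gX q -> in_ideal gX (p - q).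
Proof. by move=> hp hq; apply: in_idealD => //; apply: in_idealN. Qed.

Lemma in_idealMl a p : in_ideal gX p -> in_ideal gX (a * p).
Proof.
move=> [c ->]; exists (fun i => a * c i).
by rewrite mulr_sumr; apply: eq_bigr => i _; rewrite mulrA.
Qed.

Lemma in_ideal_gen j : in_ideal gX 'X_[G j].
Proof.
exists (fun i => (i == j)%:R); rewrite (bigD1 j) //= eqxx mul1r big1 ?addr0 //.
by move=> i /negbTE ->; rewrite mul0r.
Qed.

Lemma in_ideal_mono m : (exists j, (G j <= m)%MM) -> in_ideal gX 'X_[m].
Proof.
move=> [j hj]; rewrite -(submK hj) mpolyXD; apply: in_idealMl; exact: in_ideal_gen.
Qed.

Lemma ideal_of_supp p : (forall m, m \in msupp p -> exists j, (G j <= m)%MM) ->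
  in_ideal gX p.
Proof.
move=> h; rewrite (mpolyE p); elim: (msupp p) h => [|m s IH] h.
  by rewrite big_nil; exact: in_ideal0.
rewrite big_cons; apply: in_idealD; last by apply: IH => m' hm'; apply: h; rewrite inE hm' orbT.
rewrite -mul_mpolyC; apply: in_idealMl; apply: in_ideal_mono; apply: h.
by rewrite inE eqxx.
Qed.

Lemma ideal_supp p : in_ideal gX p -> forall m, m \in msupp p -> exists j, (G j <= m)%MM.
Proof.
move=> [c ->] m hm.
case: (boolP [exists j, (G j <= m)%MM]) => [/existsP//|].
rewrite negb_exists => /forallP hn; move: hm.
rewrite mcoeff_msupp raddf_sum /= big1 ?eqxx // => i _.
exact: coefMX_nle.
Qed.

Lemma ideal_coef p : in_ideal gX p -> forall m, (forall j, ~~ (G j <= m)%MM) -> p@_m = 0.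
Proof.
move=> hp m hm; apply/eqP; rewrite mcoeff_eq0; apply/negP => /(ideal_supp hp) [j hj].
by move: (hm j); rewrite hj.
Qed.

Lemma ideal_shift p g : in_ideal gX (p * 'X_[g]) -> forall m, p@_m != 0 ->
  exists j, (G j <= g + m)%MM.
Proof.
move=> h m hm; apply: (ideal_supp h); by rewrite mcoeff_msupp coefMX.
Qed.

End Ideal.

Lemma decomp1 g p : exists c r : P, p = c * 'X_[g] + r /\
  forall m, r@_m = if (g <= m)%MM then 0 else p@_m.
Proof.
have [r [hr hpr]] := split_supp (fun m => (g <= m)%MM) p.
have : in_ideal (fun _ : 'I_1 => ('X_[g] : P)) (p - r).
  apply: (@ideal_of_supp 1 (fun _ => g)) => m; rewrite mcoeff_msupp hpr.
  by case: ifP => [hg _|_]; [exists ord0 | rewrite eqxx].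
move=> [c e]; exists (c ord0), r; split=> //.
by rewrite -[p](subrK r) e big_ord1.
Qed.

Lemma Xneq0 g : ('X_[g] : P) != 0.
Proof. by apply/eqP => /(congr1 (mcoeff g)); rewrite mcoeffX eqxx mcoeff0; apply/eqP; rewrite oner_eq0. Qed.

Lemma coprime_div (a b : 'X_{1..n}) p q : (forall i, minn (a i) (b i) = 0)%N ->
  'X_[a] * p = 'X_[b] * q -> exists w : P, p = 'X_[b] * w /\ q = 'X_[a] * w.
Proof.
move=> cop e.
have [c [r [ep hr]]] := decomp1 b p.
have r0 : r = 0.
  apply/mpolyP => m; rewrite mcoeff0.
  case: (boolP (r@_m == 0)) => [/eqP //|nz].
  have hid : in_ideal (fun _ : 'I_1 => ('X_[b] : P)) (r * 'X_[a]).
    exists (fun _ => q - 'X_[a] * c); rewrite big_ord1.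
    have -> : r = p - c * 'X_[b] by rewrite ep addrC addKr.
    apply/eqP; rewrite -subr_eq0; apply/eqP.
    transitivity ('X_[a] * p - 'X_[b] * q); first by ring.
    by rewrite e subrr.
  have [_ hb] := @ideal_shift 1 (fun _ => b) _ _ hid _ nz.
  move: nz; rewrite hr; case: ifP; rewrite ?eqxx // => /negP hbm _; exfalso; apply: hbm.
  apply/mnm_lepP => i; move/mnm_lepP: hb => /(_ i); rewrite mnmDE.
  by move: (cop i); lia.
exists c; split; first by rewrite ep r0 addr0 mulrC.
apply: (mulfI (Xneq0 b)); rewrite -e ep r0 addr0; ring.
Qed.

End Core.

Definition mk (a b c : nat) : 'X_{1..3} := [multinom (nth 0%N [:: a; b; c] i) | i < 3].

Lemma mkE a b c (i : 'I_3) : mk a b c i = nth 0%N [:: a; b; c] i.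
Proof. exact: mnmE. Qed.

Lemma mkP (m : 'X_{1..3}) : exists a b c, m = mk a b c.
Proof.
exists (m (@Ordinal 3 0 isT)), (m (@Ordinal 3 1 isT)), (m (@Ordinal 3 2 isT)).
apply/mnmP => -[[|[|[|i]]] Hi] //; rewrite mkE //=; congr (m _); exact: val_inj.
Qed.

Lemma mk_add a b c a' b' c' : (mk a b c + mk a' b' c')%MM = mk (a + a') (b + b') (c + c').
Proof. by apply/mnmP => -[[|[|[|i]]] Hi] //; rewrite mnmDE !mkE. Qed.

Lemma mk_le a b c a' b' c' :
  (mk a b c <= mk a' b' c')%MM = [&& (a <= a')%N, (b <= b')%N & (c <= c')%N].
Proof.
apply/mnm_lepP/and3P => [h|[h1 h2 h3]].
  by split; [move: (h (@Ordinal 3 0 isT)) | move: (h (@Ordinal 3 1 isT)) | move: (h (@Ordinal 3 2 isT))]; rewrite !mkE.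
by move=> -[[|[|[|i]]] Hi] //; rewrite !mkE.
Qed.

Lemma mk_inj a b c a' b' c' : mk a b c = mk a' b' c' -> [/\ a = a', b = b' & c = c'].
Proof.
move=> e; split; [move: (congr1 (fun m : 'X_{1..3} => m (@Ordinal 3 0 isT))  e)
 | move: (congr1 (fun m : 'X_{1..3} => m (@Ordinal 3 1 isT)) e)
 | move: (congr1 (fun m : 'X_{1..3} => m (@Ordinal 3 2 isT)) e)]; by rewrite !mkE.
Qed.

Lemma mk_eq a b c a' b' c' : (mk a b c == mk a' b' c') = [&& a == a', b == b' & c == c'].
Proof.
apply/eqP/and3P => [/mk_inj [-> -> ->]|[/eqP-> /eqP-> /eqP->]] //; by rewrite !eqxx.
Qed.

Lemma mdeg_mk a b c : mdeg (mk a b c) = (a + b + c)%N.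
Proof. by rewrite mdegE !big_ord_recr big_ord0 /= !mkE /= add0n. Qed.

Lemma U0 : (U_(@inord 2 0) = mk 1 0 0)%MM.
Proof. by apply/mnmP => -[[|[|[|i]]] Hi] //; rewrite mnm1E mkE /= -val_eqE /= inordK. Qed.
Lemma U1 : (U_(@inord 2 1) = mk 0 1 0)%MM.
Proof. by apply/mnmP => -[[|[|[|i]]] Hi] //; rewrite mnm1E mkE /= -val_eqE /= inordK. Qed.
Lemma U2 : (U_(@inord 2 2) = mk 0 0 1)%MM.
Proof. by apply/mnmP => -[[|[|[|i]]] Hi] //; rewrite mnm1E mkE /= -val_eqE /= inordK. Qed.

Lemma mk_muln a b c k : (mk a b c *+ k)%MM = mk (a * k) (b * k) (c * k).
Proof. by apply/mnmP => -[[|[|[|i]]] Hi] //; rewrite mulmnE !mkE. Qed.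

Lemma test (a b d : nat) : (2 <= d)%N -> (mk a b 0 <= mk d 0 0)%MM -> (a <= d)%N.
Proof. rewrite mk_le => h1 h2. lia. Qed.

Notation o5 k := (@Ordinal 5 k isT).
Notation o7 k := (@Ordinal 7 k isT).
Notation o3 k := (@Ordinal 3 k isT).

Lemma ord5P (Q : 'I_5 -> Prop) : Q (o5 0) -> Q (o5 1) -> Q (o5 2) -> Q (o5 3) -> Q (o5 4) -> forall i, Q i.
Proof.
by move=> ? ? ? ? ? [[|[|[|[|[|i]]]]] Hi] //; rewrite (bool_irrelevance Hi isT).
Qed.
Lemma ord7P (Q : 'I_7 -> Prop) : Q (o7 0) -> Q (o7 1) -> Q (o7 2) -> Q (o7 3) -> Q (o7 4) ->
  Q (o7 5) -> Q (o7 6) -> forall i, Q i.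
Proof.
by move=> ? ? ? ? ? ? ? [[|[|[|[|[|[|[|i]]]]]]] Hi] //; rewrite (bool_irrelevance Hi isT).
Qed.
Lemma ord3P (Q : 'I_3 -> Prop) : Q (o3 0) -> Q (o3 1) -> Q (o3 2) -> forall i, Q i.
Proof.
by move=> ? ? ? [[|[|[|i]]] Hi] //; rewrite (bool_irrelevance Hi isT).
Qed.

Section S.
Variable K : fieldType.
Local Notation P := {mpoly K[3]}.

Lemma sum3V (V : nmodType) (F : 'I_3 -> V) : \sum_(k < 3) F k = F (o3 0) + F (o3 1) + F (o3 2).
Proof. rewrite !big_ord_recl big_ord0 addr0 !addrA; do 3 try congr (_ + _); congr F; exact: val_inj. Qed.

Lemma sum5 (F : 'I_5 -> P) : \sum_(k < 5) F k = F (o5 0) + F (o5 1) + F (o5 2) + F (o5 3) + F (o5 4).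
Proof. rewrite !big_ord_recl big_ord0 addr0 !addrA; do 5 try congr (_ + _); congr F; exact: val_inj. Qed.
Lemma sum7 (F : 'I_7 -> P) : \sum_(k < 7) F k =
  F (o7 0) + F (o7 1) + F (o7 2) + F (o7 3) + F (o7 4) + F (o7 5) + F (o7 6).
Proof. rewrite !big_ord_recl big_ord0 addr0 !addrA; do 7 try congr (_ + _); congr F; exact: val_inj. Qed.
Lemma sum3 (F : 'I_3 -> P) : \sum_(k < 3) F k = F (o3 0) + F (o3 1) + F (o3 2).
Proof. rewrite !big_ord_recl big_ord0 addr0 !addrA; do 3 try congr (_ + _); congr F; exact: val_inj. Qed.

Lemma Xcancel a b c a' b' c' : a = a' -> b = b' -> c = c' ->
  ('X_[mk a b c] : P) - 'X_[mk a' b' c'] = 0.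
Proof. by move=> -> -> ->; rewrite subrr. Qed.
Lemma Xcancel' a b c a' b' c' : a = a' -> b = b' -> c = c' ->
  - ('X_[mk a b c] : P) + 'X_[mk a' b' c'] = 0.
Proof. by move=> -> -> ->; rewrite addNr. Qed.

Variable d : nat.
Hypothesis hd : (2 <= d)%N.

Definition G (j : nat) : 'X_{1..3} :=
  nth 0%MM [:: mk (2*d) 0 0; mk 0 (2*d) 0; mk 0 0 (2*d); mk d d 0; mk 1 0 (2*d-1)] j.

Local Notation X a b c := ('X_[mk a b c] : P).

Definition e2 (i j : nat) : P :=
  match i, j with
  | 2, 0 => X 1 0 0 | 4, 0 => - X 0 0 1
  | 0, 1 => X 0 d 0 | 3, 1 => - X d 0 0
  | 1, 2 => X d 0 0 | 3, 2 => - X 0 d 0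
  | 0, 3 => X 0 0 (2*d-1) | 4, 3 => - X (2*d-1) 0 0
  | 3, 4 => X 0 0 (2*d-1) | 4, 4 => - X (d-1) d 0
  | 1, 5 => X 0 0 (2*d) | 2, 5 => - X 0 (2*d) 0
  | 1, 6 => X 1 0 (2*d-1) | 4, 6 => - X 0 (2*d) 0
  | _, _ => 0
  end.

Definition e3 (i j : nat) : P :=
  match i, j with
  | 0, 0 => X 0 (2*d) 0 | 5, 0 => X 1 0 0 | 6, 0 => - X 0 0 1
  | 1, 1 => X 0 0 (2*d-1) | 3, 1 => - X 0 d 0 | 4, 1 => X d 0 0
  | 2, 2 => X 0 0 (2*d-1) | 4, 2 => X 0 d 0 | 6, 2 => - X (d-1) 0 0
  | _, _ => 0
  end.

Definition d1 : 'M[P]_(1, 5) := \row_(j < 5) 'X_[G j].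
Definition d2 : 'M[P]_(5, 7) := \matrix_(i < 5, j < 7) e2 i j.
Definition d3 : 'M[P]_(7, 3) := \matrix_(i < 7, j < 3) e3 i j.

Ltac xsimp := rewrite /= ?mulr0 ?mul0r ?add0r ?addr0 ?mulrN ?mulNr ?opprK -?mpolyXD ?mk_add.
Ltac xcan := first [ apply: Xcancel; lia | apply: Xcancel'; lia | done ].

Lemma d1d2 : d1 *m d2 = 0.
Proof.
apply/matrixP => i j; rewrite ord1 !mxE sum5 !mxE.
by elim/ord7P: j; xsimp; xcan.
Qed.

Lemma d2d3 : d2 *m d3 = 0.
Proof.
apply/matrixP => i j; rewrite !mxE sum7 !mxE.
by elim/ord5P: i; elim/ord3P: j; xsimp; xcan.
Qed.

Lemma homX a b c k : (a + b + c)%N = k -> X a b c \is k.-homog.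
Proof. by move=> e; rewrite dhomogX /= mdeg_mk e. Qed.
Lemma homNX a b c k : (a + b + c)%N = k -> - X a b c \is k.-homog.
Proof. by move=> e; rewrite rpredN; apply: homX. Qed.

Ltac grd := first [ by left | right; split; [lia | first [apply: homX; lia | apply: homNX; lia]] ].

Definition s1 := fun _ : 'I_5 => (2 * d)%N.
Definition s2 := (fun j : 'I_7 => nth 0%N [:: (2 * d + 1)%N; (3 * d)%N; (3 * d)%N;
                          (4 * d - 1)%N; (4 * d - 1)%N; (4 * d)%N; (4 * d)%N] j).
Definition s3 := (fun j : 'I_3 => nth 0%N [:: (4 * d + 1)%N; (5 * d - 1)%N; (5 * d - 1)%N] j).

Lemma gr1 : graded_mx (fun _ => 0%N) s1 d1.
Proof.
move=> i j; rewrite !mxE; right; split=> //; rewrite /s1 subn0.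
elim/ord5P: j; rewrite /G /=; apply: homX. all: lia.
Qed.

Lemma gr2 : graded_mx s1 s2 d2.
Proof. by move=> i j; rewrite !mxE /s1 /s2; elim/ord5P: i; elim/ord7P: j; rewrite /=; grd. Qed.

Lemma gr3 : graded_mx s2 s3 d3.
Proof. by move=> i j; rewrite !mxE /s3 /s2; elim/ord7P: i; elim/ord3P: j; rewrite /=; grd. Qed.

Lemma coefX0 a b c : (a + b + c > 0)%N -> (X a b c)@_0 = 0.
Proof.
move=> h; rewrite mcoeffX; case: eqP => // e; move: h.
by rewrite -mdeg_mk e mdeg0.
Qed.
Lemma coefNX0 a b c : (a + b + c > 0)%N -> (- X a b c)@_0 = 0.
Proof. by move=> h; rewrite mcoeffN coefX0 ?oppr0. Qed.

Ltac mnl := first [ by rewrite mcoeff0 | apply: coefX0; lia | apply: coefNX0; lia ].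

Lemma mn1 : minimal_mx d1.
Proof. by move=> i j; rewrite !mxE; elim/ord5P: j; rewrite /G /=; mnl. Qed.
Lemma mn2 : minimal_mx d2.
Proof. by move=> i j; rewrite !mxE; elim/ord5P: i; elim/ord7P: j; mnl. Qed.
Lemma mn3 : minimal_mx d3.
Proof. by move=> i j; rewrite !mxE; elim/ord7P: i; elim/ord3P: j; mnl. Qed.

Lemma XMM a1 b1 c1 a2 b2 c2 a3 b3 c3 a4 b4 c4 :
  (a1 + a2 = a3 + a4)%N -> (b1 + b2 = b3 + b4)%N -> (c1 + c2 = c3 + c4)%N ->
  X a1 b1 c1 * X a2 b2 c2 = X a3 b3 c3 * X a4 b4 c4.
Proof. by move=> e1 e2 e3; rewrite -!mpolyXD !mk_add e1 e2 e3. Qed.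

Lemma cop_mk a b c a' b' c' : minn a a' = 0%N -> minn b b' = 0%N -> minn c c' = 0%N ->
  forall i, minn (mk a b c i) (mk a' b' c' i) = 0%N.
Proof. by move=> h1 h2 h3; elim/ord3P; rewrite !mkE. Qed.

Ltac cop := apply: cop_mk; lia.

Lemma rowE (M : 'M[P]_(5,7)) (v : 'cV[P]_7) i :
  (M *m v) i ord0 = \sum_(k < 7) M i k * v k ord0.
Proof. by rewrite mxE. Qed.

Lemma inj3 (v : 'cV[P]_3) : d3 *m v = 0 -> v = 0.
Proof.
move=> hv.
have R k : \sum_(j < 3) d3 k j * v j ord0 = 0 by move: (congr1 (fun M : 'M[P]_(7,1) => M k ord0) hv); rewrite !mxE.
have r0 := R (o7 0); have r1 := R (o7 1); have r2 := R (o7 2).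
rewrite sum3 !mxE /= !mul0r ?add0r ?addr0 in r0.
rewrite sum3 !mxE /= !mul0r ?add0r ?addr0 in r1.
rewrite sum3 !mxE /= !mul0r ?add0r ?addr0 in r2.
apply/matrixP => i j; rewrite ord1 mxE; elim/ord3P: i.
- by move/eqP: r0; rewrite mulf_eq0 (negbTE (Xneq0 _ _)) => /eqP.
- by move/eqP: r1; rewrite mulf_eq0 (negbTE (Xneq0 _ _)) => /eqP.
- by move/eqP: r2; rewrite mulf_eq0 (negbTE (Xneq0 _ _)) => /eqP.
Qed.

Lemma lin0 (a b e : P) : e = 0 -> a - b = - e -> a = b.
Proof. by move=> -> h; apply/eqP; rewrite -subr_eq0 h oppr0. Qed.
Lemma lin0' (a b e : P) : e = 0 -> a - b = e -> a = b.
Proof. by move=> -> h; apply/eqP; rewrite -subr_eq0 h. Qed.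
Ltac lin h := first [apply: (lin0 h); ring | apply: (lin0' h); ring].

Lemma ex2 (v : 'cV[P]_7) : d2 *m v = 0 -> exists w : 'cV[P]_3, v = d3 *m w.
Proof.
move=> hv.
have R k : \sum_(j < 7) d2 k j * v j ord0 = 0 by move: (congr1 (fun M : 'M[P]_(5,1) => M k ord0) hv); rewrite !mxE.
have r0 := R (o5 0); have r1 := R (o5 1); have r2 := R (o5 2); have r3 := R (o5 3).
rewrite sum7 !mxE /= !mul0r ?add0r ?addr0 in r0.
rewrite sum7 !mxE /= !mul0r ?add0r ?addr0 in r1.
rewrite sum7 !mxE /= !mul0r ?add0r ?addr0 in r2.
rewrite sum7 !mxE /= !mul0r ?add0r ?addr0 in r3.
have [w1 [e0 e5]] : exists w, v (o7 0) ord0 = X 0 (2*d) 0 * w /\ v (o7 5) ord0 = X 1 0 0 * w.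
  apply: coprime_div; first by cop.
  by lin r2.
have [w2 [e1 e3]] : exists w, v (o7 1) ord0 = X 0 0 (2*d-1) * w /\ - v (o7 3) ord0 = X 0 d 0 * w.
  apply: coprime_div; first by cop.
  by lin r0.
have [w3 [e2 e4]] : exists w, v (o7 2) ord0 = X 0 0 (2*d-1) * w /\
    v (o7 4) ord0 - X d 0 0 * w2 = X 0 d 0 * w.
  apply: coprime_div; first by cop.
  rewrite e1 in r3; by lin r3.
have e6 : v (o7 6) ord0 = - X 0 0 1 * w1 - X (d-1) 0 0 * w3.
  apply: (mulfI (Xneq0 _ (mk 1 0 (2*d-1)))).
  rewrite e2 e5 !mulrA in r1.
  rewrite (@XMM d 0 0 0 0 (2*d-1) 1 0 (2*d-1) (d-1) 0 0) in r1; try lia.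
  rewrite (@XMM 0 0 (2*d) 1 0 0 1 0 (2*d-1) 0 0 1) in r1; try lia.
  by lin r1.
exists (\col_(i < 3) nth 0 [:: w1; w2; w3] i).
apply/matrixP => i j; rewrite ord1 !mxE sum3 !mxE /=.
elim/ord7P: i; rewrite /= ?mul0r ?add0r ?addr0.
- by rewrite e0.
- by rewrite e1.
- by rewrite e2.
- by rewrite mulNr -e3 opprK.
- by rewrite -e4 addrC subrK.
- by rewrite e5.
- rewrite e6; ring.
Qed.

Lemma nz_if (c : bool) (x : K) : (if c then 0 else x) != 0 -> ~~ c /\ x != 0.
Proof. by case: c; rewrite ?eqxx. Qed.

Lemma shift_gen (l : seq 'X_{1..3}) (cs : seq P) (r : P) g :
  r * 'X_[g] = \sum_(i < size l) cs`_i * 'X_[nth 0%MM l i] ->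
  forall m, r@_m != 0 -> exists j : 'I_(size l), (nth 0%MM l j <= g + m)%MM.
Proof.
move=> e m nz.
have hid : in_ideal (fun j : 'I_(size l) => ('X_[nth 0%MM l j] : P)) (r * 'X_[g]).
  by exists (fun i => cs`_i).
exact: (ideal_shift hid nz).
Qed.

Lemma ex1 (v : 'cV[P]_5) : d1 *m v = 0 -> exists w : 'cV[P]_7, v = d2 *m w.
Proof.
move=> hv.
set u0 := v (o5 0) ord0; set u1 := v (o5 1) ord0; set u2 := v (o5 2) ord0;
  set u3 := v (o5 3) ord0; set u4 := v (o5 4) ord0.
have [b [r0' [eu0 hr0']]] := decomp1 (mk 0 d 0) u0.
have [c4 [r1 [er0' hr1]]] := decomp1 (mk 0 0 (2*d-1)) r0'.
have [c3 [q1 [eu1 hq1]]] := decomp1 (mk d 0 0) u1.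
have [c6 [q2 [eq1 hq2]]] := decomp1 (mk 0 0 (2*d)) q1.
have [c7 [r2 [eq2 hr2]]] := decomp1 (mk 1 0 (2*d-1)) q2.
have [c1 [r3 [eu2 hr3]]] := decomp1 (mk 1 0 0) (u2 + X 0 (2*d) 0 * c6).
have [c5 [r4 [eu3 hr4]]] := decomp1 (mk 0 0 (2*d-1)) (u3 + X d 0 0 * b + X 0 d 0 * c3).
set r5 := u4 + X (2*d-1) 0 0 * c4 + X 0 (2*d) 0 * c7 + X 0 0 1 * c1 + X (d-1) d 0 * c5.
set w : 'cV[P]_7 := \col_(i < 7) nth 0 [:: c1; b; c3; c4; c5; c6; c7] i.
set rv := v - d2 *m w.
have hrv : d1 *m rv = 0 by rewrite /rv mulmxBr mulmxA d1d2 mul0mx hv subr0.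
have E k : rv k ord0 = v k ord0 - \sum_(j < 7) e2 k j * nth 0 [:: c1; b; c3; c4; c5; c6; c7] j.
  by rewrite /rv !mxE; congr (_ - _); apply: eq_bigr => j _; rewrite !mxE.
have Rv0 : rv (o5 0) ord0 = r1.
  rewrite E sum7 /= ?mul0r ?add0r ?addr0 -/u0.
  rewrite eu0 er0'; ring.
have Rv1 : rv (o5 1) ord0 = r2.
  rewrite E sum7 /= ?mul0r ?add0r ?addr0 -/u1.
  rewrite eu1 eq1 eq2; ring.
have Rv2 : rv (o5 2) ord0 = r3.
  rewrite E sum7 /= ?mul0r ?add0r ?addr0 -/u2.
  have -> : u2 = c1 * X 1 0 0 + r3 - X 0 (2*d) 0 * c6 by rewrite -eu2 addrK.
  ring.
have Rv3 : rv (o5 3) ord0 = r4.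
  rewrite E sum7 /= ?mul0r ?add0r ?addr0 -/u3.
  have -> : u3 = c5 * X 0 0 (2*d-1) + r4 - (X d 0 0 * b + X 0 d 0 * c3) by rewrite -eu3; ring.
  ring.
have Rv4 : rv (o5 4) ord0 = r5.
  rewrite E sum7 /= ?mul0r ?add0r ?addr0 -/u4 /r5; ring.
have h : X (2*d) 0 0 * r1 + X 0 (2*d) 0 * r2 + X 0 0 (2*d) * r3 + X d d 0 * r4 + X 1 0 (2*d-1) * r5 = 0.
  move: (congr1 (fun M : 'M[P]_(1,1) => M ord0 ord0) hrv); rewrite mxE sum5 Rv0 Rv1 Rv2 Rv3 Rv4 !mxE /=.
  done.
have R1 : r1 = 0.
  apply/mpolyP => m; rewrite mcoeff0; case: (boolP (r1@_m == 0)) => [/eqP//|nz].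
  have [j hj] := @shift_gen [:: mk 0 (2*d) 0; mk 0 0 (2*d); mk d d 0; mk 1 0 (2*d-1)]
     [:: -r2; -r3; -r4; -r5] r1 (mk (2*d) 0 0) ltac:(rewrite !big_ord_recl big_ord0 /=; lin h) m nz.
  rewrite hr1 in nz; have [n1 {}nz] := nz_if nz; rewrite hr0' in nz; have [n0 _] := nz_if nz.
  move: n0 n1 hj; have [a [b' [c ->]]] := mkP m; rewrite !mk_le.
  by case: j => [[|[|[|[|j]]]] Hj] //=; rewrite mk_add mk_le; lia.
rewrite R1 mulr0 add0r in h.
have R2 : r2 = 0.
  apply/mpolyP => m; rewrite mcoeff0; case: (boolP (r2@_m == 0)) => [/eqP//|nz].
  have [j hj] := @shift_gen [:: mk 0 0 (2*d); mk d d 0; mk 1 0 (2*d-1)]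
     [:: -r3; -r4; -r5] r2 (mk 0 (2*d) 0) ltac:(rewrite !big_ord_recl big_ord0 /=; lin h) m nz.
  rewrite hr2 in nz; have [n2 {}nz] := nz_if nz; rewrite hq2 in nz; have [n1 {}nz] := nz_if nz; rewrite hq1 in nz; have [n0 _] := nz_if nz.
  move: n0 n1 n2 hj; have [a [b' [c ->]]] := mkP m; rewrite !mk_le.
  by case: j => [[|[|[|j]]] Hj] //=; rewrite mk_add mk_le; lia.
rewrite R2 mulr0 add0r in h.
have R3 : r3 = 0.
  apply/mpolyP => m; rewrite mcoeff0; case: (boolP (r3@_m == 0)) => [/eqP//|nz].
  have [j hj] := @shift_gen [:: mk d d 0; mk 1 0 (2*d-1)]
     [:: -r4; -r5] r3 (mk 0 0 (2*d)) ltac:(rewrite !big_ord_recl big_ord0 /=; lin h) m nz.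
  rewrite hr3 in nz; have [n0 _] := nz_if nz.
  move: n0 hj; have [a [b' [c ->]]] := mkP m; rewrite !mk_le.
  by case: j => [[|[|j]] Hj] //=; rewrite mk_add mk_le; lia.
rewrite R3 mulr0 add0r in h.
have R4 : r4 = 0.
  apply/mpolyP => m; rewrite mcoeff0; case: (boolP (r4@_m == 0)) => [/eqP//|nz].
  have [j hj] := @shift_gen [:: mk 1 0 (2*d-1)]
     [:: -r5] r4 (mk d d 0) ltac:(rewrite !big_ord_recl big_ord0 /=; lin h) m nz.
  rewrite hr4 in nz; have [n0 _] := nz_if nz.
  move: n0 hj; have [a [b' [c ->]]] := mkP m; rewrite !mk_le.
  by case: j => [[|j] Hj] //=; rewrite mk_add mk_le; lia.
rewrite R4 mulr0 add0r in h.
have R5 : r5 = 0 by move/eqP: h; rewrite mulf_eq0 (negbTE (Xneq0 _ _)) => /eqP.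
exists w; apply/eqP; rewrite -subr_eq0; apply/eqP.
apply/matrixP => i j; rewrite ord1 [RHS]mxE; elim/ord5P: i.
- by rewrite -/rv Rv0.
- by rewrite -/rv Rv1.
- by rewrite -/rv Rv2.
- by rewrite -/rv Rv3.
- by rewrite -/rv Rv4.
Qed.

Lemma exG a b c : (exists j : 'I_5, (G j <= mk a b c)%MM) <->
  ((2*d <= a)%N \/ (2*d <= b)%N \/ (2*d <= c)%N \/ (d <= a)%N && (d <= b)%N \/ (1 <= a)%N && (2*d-1 <= c)%N).
Proof.
split.
- by case=> j; elim/ord5P: j; rewrite /G /= mk_le; lia.
- case=> [h|[h|[h|[h|h]]]]; [exists (o5 0)|exists (o5 1)|exists (o5 2)|exists (o5 3)|exists (o5 4)]; rewrite /G /= mk_le; lia.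
Qed.

Lemma nexG a b c : ~~ [exists j : 'I_5, (G j <= mk a b c)%MM] ->
  ~ ((2*d <= a)%N \/ (2*d <= b)%N \/ (2*d <= c)%N \/ (d <= a)%N && (d <= b)%N \/ (1 <= a)%N && (2*d-1 <= c)%N).
Proof. by move=> /existsPn h /exG [j]; rewrite (negbTE (h j)). Qed.

Definition cond a b c := ((2*d <= a)%N \/ (2*d <= b)%N \/ (2*d <= c)%N \/ (d <= a)%N && (d <= b)%N \/ (1 <= a)%N && (2*d-1 <= c)%N).

Definition Sm (j : nat) : 'X_{1..3} :=
  nth 0%MM [:: mk 0 (2*d-1) (2*d-1); mk (2*d-1) (d-1) (2*d-2); mk (d-1) (2*d-1) (2*d-2)] j.

Definition gX := fun j : 'I_5 => ('X_[G j] : P).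

Lemma Uo0 : (U_(o3 0) = mk 1 0 0)%MM.
Proof. by apply/mnmP => -[[|[|[|i]]] Hi] //; rewrite mnm1E mkE. Qed.
Lemma Uo1 : (U_(o3 1) = mk 0 1 0)%MM.
Proof. by apply/mnmP => -[[|[|[|i]]] Hi] //; rewrite mnm1E mkE. Qed.
Lemma Uo2 : (U_(o3 2) = mk 0 0 1)%MM.
Proof. by apply/mnmP => -[[|[|[|i]]] Hi] //; rewrite mnm1E mkE. Qed.

Lemma Xv (v : 'I_3) : ('X_v : P) = 'X_[U_(v)].
Proof. by []. Qed.

Lemma soc_colon (j : 'I_3) (v : 'I_3) : in_ideal gX ('X_v * 'X_[Sm j]).
Proof.
rewrite -mpolyXD; apply: in_ideal_mono; elim/ord3P: v; elim/ord3P: j;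
  rewrite ?Uo0 ?Uo1 ?Uo2 /Sm /= mk_add exG; rewrite /cond; lia.
Qed.

Lemma soc_nat a b c : ~ cond a b c -> cond (1 + a) b c -> cond a (1 + b) c -> cond a b (1 + c) ->
  (a = 0 /\ b = 2*d-1 /\ c = 2*d-1)%N \/ (a = 2*d-1 /\ b = d-1 /\ c = 2*d-2)%N \/
  (a = d-1 /\ b = 2*d-1 /\ c = 2*d-2)%N.
Proof. rewrite /cond; lia. Qed.

Lemma Sm_neq (i j : 'I_3) : (Sm i == Sm j) = (i == j).
Proof. by elim/ord3P: i; elim/ord3P: j; rewrite /Sm /= mk_eq; apply/idP/idP; lia. Qed.

Lemma Sm_nG (i : 'I_3) : forall j : 'I_5, ~~ (G j <= Sm i)%MM.
Proof.
move=> j; apply/negP => h.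
have : exists j : 'I_5, (G j <= Sm i)%MM by exists j.
clear h; by elim/ord3P: i; rewrite /Sm /= exG; lia.
Qed.

Lemma coef_combo (c : 'I_3 -> K) m :
  (\sum_(j < 3) c j *: ('X_[Sm j] : P))@_m = \sum_(j < 3) (if Sm j == m then c j else 0).
Proof.
rewrite raddf_sum /=; apply: eq_bigr => j _; rewrite mcoeffZ mcoeffX.
by case: eqP; rewrite ?mulr1 ?mulr0.
Qed.

Lemma soc_indep (c : 'I_3 -> K) : in_ideal gX (\sum_(j < 3) c j *: 'X_[Sm j]) -> forall j, c j = 0.
Proof.
move=> h k; have := ideal_coef h (Sm_nG k); rewrite coef_combo.
rewrite (bigD1 k) //= eqxx big1 ?addr0 // => j /negbTE hj.
by rewrite Sm_neq hj.
Qed.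

Lemma soc_span q : in_colon_max gX q -> exists c : 'I_3 -> K,
  in_ideal gX (q - \sum_(j < 3) c j *: 'X_[Sm j]).
Proof.
move=> hq.
have [r [hr hqr]] := split_supp (fun m => [exists j : 'I_5, (G j <= m)%MM]) q.
have mem : forall m, r@_m != 0 -> exists j : 'I_3, m = Sm j.
  move=> m; rewrite hr; case: ifP => [_|hm]; first by rewrite eqxx.
  move=> nz.
  have sh : forall v : 'I_3, exists j : 'I_5, (G j <= U_(v) + m)%MM.
    move=> v; apply: (ideal_supp (hq v)); rewrite mcoeff_msupp mulrC coefMX //.
  move: (sh (o3 0)) (sh (o3 1)) (sh (o3 2)) (negbT hm).
  have [a [b [c ->]]] := mkP m; rewrite Uo0 Uo1 Uo2 !mk_add !exG => h0 h1 h2 /nexG h3.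
  case: (soc_nat h3 h0 h1 h2) => [[-> [-> ->]]|[[-> [-> ->]]|[-> [-> ->]]]];
    [exists (o3 0)|exists (o3 1)|exists (o3 2)]; by [].
exists (fun j => r@_(Sm j)).
have -> : q - \sum_(j < 3) r@_(Sm j) *: 'X_[Sm j] = q - r.
  congr (_ - _); apply/mpolyP => m; rewrite coef_combo.
  case: (boolP (r@_m == 0)) => [/eqP r0|/mem [k ->]].
    rewrite r0 big1 // => j _; case: eqP => // ->; by rewrite r0.
  rewrite (bigD1 k) //= eqxx big1 ?addr0 // => j /negbTE hj.
  by rewrite Sm_neq hj.
apply: ideal_of_supp => m; rewrite mcoeff_msupp hqr.
by case: ifP => [/existsP //|]; rewrite eqxx.
Qed.

End S.

Lemma mkexpoP n D (f : 'I_n -> nat) : (\sum_i f i)%N = D -> exists a : expo n D, forall i, ex a i = f i.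
Proof.
move=> h.
have hf i : (f i < D.+1)%N by rewrite ltnS -h (bigD1 i) //= leq_addr.
pose t := [tuple (inord (f i) : 'I_D.+1) | i < n].
have ht : (\sum_(i < n) val (tnth t i) == D)%N.
  apply/eqP; transitivity (\sum_i f i)%N; last exact: h.
  by apply: eq_bigr => i _; rewrite tnth_mktuple /= inordK.
exists (exist _ t ht) => i; by rewrite /ex /= tnth_mktuple /= inordK.
Qed.

Lemma ex_inj n D (a b : expo n D) : (forall i, ex a i = ex b i) -> a = b.
Proof.
move=> h; apply: val_inj; apply: eq_from_tnth => i; apply: val_inj; exact: h.
Qed.

Lemma ex_sum3 D (a : expo 3 D) : (ex a (o3 0) + ex a (o3 1) + ex a (o3 2))%N = D.
Proof.
transitivity (\sum_(i<3) val (tnth (val a) i))%N; last by apply/eqP; exact: (valP a).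
rewrite !big_ord_recr big_ord0 /= add0n /ex.
by rewrite !(tnth_nth ord0).
Qed.


Section C.
Variable K : fieldType.
Variable d : nat.
Hypothesis hd : (2 <= d)%N.

Definition lam (t : 'I_5) (al : expo 3 (2 * d)) : K :=
  ([forall l, ex al l == G d t l])%:R.

Lemma Gsum (t : 'I_5) : (\sum_(l < 3) G d t l)%N = (2 * d)%N.
Proof. rewrite -mdegE; elim/ord5P: t; rewrite /G /= mdeg_mk; lia. Qed.

Lemma lam_nz t : exists al, lam t al != 0.
Proof.
have [al hal] := mkexpoP (Gsum t).
exists al; rewrite /lam; have -> : [forall l, ex al l == G d t l] by apply/forallP => l; rewrite hal.
by rewrite oner_eq0.
Qed.

Lemma sum3n (F : 'I_3 -> nat) : (\sum_(k < 3) F k)%N = (F (o3 0) + F (o3 1) + F (o3 2))%N.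
Proof.
rewrite !big_ord_recl big_ord0 addn0 !addnA.
by do 2 try congr (_ + _); congr F; apply: val_inj.
Qed.

Lemma Meval_lam e (g : expo 3 (2 * d + e)) (tb : 'I_5 * expo 3 e) :
  Meval lam g tb = ([forall l, ex g l == G d tb.1 l + ex tb.2 l])%:R :> K.
Proof.
rewrite /Meval; case: (boolP [forall l, _]) => H.
- have [al0 h0] := mkexpoP (Gsum tb.1).
  rewrite (bigD1 al0) /=; last by apply/forallP => l; rewrite h0; exact: (forallP H l).
  rewrite /lam; have -> : [forall l, ex al0 l == G d tb.1 l] by apply/forallP => l; rewrite h0.
  rewrite big1 ?addr0 // => al /andP [_ nal].
  case: (boolP [forall l, ex al l == G d tb.1 l]) => // hal.
  by move/eqP: nal; case; apply: ex_inj => l; rewrite h0; exact/eqP/(forallP hal l).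
- rewrite big1 // => al hal; rewrite /lam.
  case: (boolP [forall l, ex al l == G d tb.1 l]) => // h2.
  move/negP: H; case; apply/forallP => l.
  by move/forallP: hal => /(_ l) /eqP ->; move/forallP: h2 => /(_ l) /eqP ->.
Qed.

Lemma Vc : V_proper K 3 (2*d) 5 (3*d-3).
Proof.
exists lam; split; first exact: lam_nz.
have ex_row : forall g : expo 3 (2 * d + (3 * d - 3)), exists tb : 'I_5 * expo 3 (3*d-3),
    [forall l, ex g l == G d tb.1 l + ex tb.2 l].
  move=> g; have hs := ex_sum3 g.
  have [t ht] : exists t : 'I_5, (G d t <= mk (ex g (o3 0)) (ex g (o3 1)) (ex g (o3 2)))%MM.
    by apply/exG; lia.
  have gs := Gsum t; move: ht gs.
  have [a [b [c ea]]] := mkP (G d t); rewrite ea mk_le -mdegE mdeg_mk => ht gs.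
  have hsum : (\sum_l (ex g l - G d t l))%N = (3 * d - 3)%N.
    rewrite sum3n ea !mkE /=; lia.
  have [be hb] := mkexpoP hsum.
  exists (t, be); apply/forallP => l; rewrite /= hb ea.
  by elim/ord3P: l; rewrite !mkE /=; apply/eqP; lia.
have hs0 : (\sum_(l < 3) (if val l == 0%N then (3 * d - 3)%N else 0%N))%N = (3 * d - 3)%N.
  by rewrite sum3n /= !addn0.
have [b0 _] := mkexpoP hs0.
pose col (i : 'I_(Ddim 3 (2 * d + (3 * d - 3)))) : 'I_5 * expo 3 (3 * d - 3) :=
  odflt (ord0, b0) [pick tb : 'I_5 * expo 3 (3 * d - 3) |
     [forall l, ex (enum_val i) l == G d tb.1 l + ex tb.2 l]].
have colP i : [forall l, ex (enum_val i) l == G d (col i).1 l + ex (col i).2 l].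
  rewrite /col; case: pickP => [tb htb|hn] //=.
  by have [tb htb] := ex_row (enum_val i); rewrite hn in htb.
exists col; split.
- move=> i j e; apply: enum_val_inj; apply: ex_inj => l.
  by move: (forallP (colP i) l) (forallP (colP j) l); rewrite e => /eqP -> /eqP ->.
- set M := \matrix_(i, j) _.
  have -> : M = 1%:M.
    apply/matrixP => i j; rewrite !mxE Meval_lam.
    case: (eqVneq i j) => [->|nij]; first by rewrite colP.
    case: (boolP [forall l, _]) => // h; case/eqP: nij; apply: enum_val_inj; apply: ex_inj => l.
    by move: (forallP h l) (forallP (colP j) l) => /eqP -> /eqP ->.
  by rewrite det1 oner_eq0.
Qed.

End C.

Unset Implicit Arguments.

Lemma Ieq (K : fieldType) (d : nat) (hd : (2 <= d)%N) (j : 'I_5) :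
  nth 0 [:: ('X_(@inord 2 0) : {mpoly K[3]}) ^+ (2 * d); 'X_(@inord 2 1) ^+ (2 * d);
     'X_(@inord 2 2) ^+ (2 * d); 'X_(@inord 2 0) ^+ d * 'X_(@inord 2 1) ^+ d;
     'X_(@inord 2 0) * 'X_(@inord 2 2) ^+ (2 * d - 1)] j = gX K d j.
Proof.
rewrite /gX; elim/ord5P: j; rewrite /G /= !mpolyXn ?U0 ?U1 ?U2 !mk_muln -?mpolyXD ?mk_add;
  congr 'X_[mk _ _ _]; lia.
Qed.

Theorem proposition2p4 (K : fieldType) (d : nat) (hd : (2 <= d)%N) :
  let x : {mpoly K[3]} := 'X_(@inord 2 0) in
  let y : {mpoly K[3]} := 'X_(@inord 2 1) in
  let z : {mpoly K[3]} := 'X_(@inord 2 2) in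
  let I : 'I_5 -> {mpoly K[3]} := fun j =>
    nth 0 [:: x ^+ (2 * d); y ^+ (2 * d); z ^+ (2 * d);
              x ^+ d * y ^+ d; x * z ^+ (2 * d - 1)] j in
  [/\ (* (a) *)
      min_graded_free_res3 I
        (fun _ : 'I_5 => (2 * d)%N)
        (fun j : 'I_7 => nth 0%N [:: (2 * d + 1)%N; (3 * d)%N; (3 * d)%N;
                          (4 * d - 1)%N; (4 * d - 1)%N; (4 * d)%N; (4 * d)%N] j)
        (fun j : 'I_3 => nth 0%N [:: (4 * d + 1)%N; (5 * d - 1)%N; (5 * d - 1)%N] j),
      (* (b) *)
      socle_iso I [:: (4 * d - 2)%N; (5 * d - 4)%N; (5 * d - 4)%N] &
      (* (c) *)
      V_proper K 3 (2 * d) 5 (3 * d - 3)].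
Proof.
move=> x y z I.
have -> : I = gX K d by apply: functional_extensionality => j; exact: Ieq.
split.
- exists (d1 K d), (d2 K d), (d3 K d).
  have e1 : (fun j => d1 K d ord0 j) = gX K d.
    by apply: functional_extensionality => j; rewrite !mxE.
  split; first exact: gr1.
  split; first exact: gr2.
  split; first exact: gr3.
  split; first exact: mn1.
  split; first exact: mn2.
  split; first exact: mn3.
  split; first by move=> p; rewrite e1.
  split; first by split; [exact: d1d2 | exact: ex1].
  split; first by split; [exact: d2d3 | exact: ex2].
  exact: inj3.
- exists (fun j : 'I_3 => ('X_[Sm d j] : {mpoly K[3]})); split.
  + by elim/ord3P; rewrite /Sm /=; apply: homX; lia.
  + by move=> j v; exact: soc_colon.
  + by move=> q hq; exact: soc_span.
  + by move=> c; exact: soc_indep.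
- exact: Vc.
Qed.
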